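(* Let $A_i\in\mathbb{R}^{n\times n}$, $i\ge -1$, be entrywise nonnegative matrices such that $A=\sum_{i=-1}^{\infty}A_i$ is irreducible and row stochastic. Assume that $\sum_{i=-1}^\infty iA_i$ converges and $\eta=\mathbf v^T\mathbf w<0$, where $\mathbf v>0$ satisfies $\mathbf v^TA=\mathbf v^T$, $\mathbf v^T\mathbf e=1$, and $\mathbf w=\sum_{i=-1}^\infty iA_i\mathbf e$. Let $G$ be the componentwise minimal nonnegative solution of $X=\sum_{i=-1}^{\infty}A_iX^{i+1}$. Set $X_0=0$ and, for a sequence of reals $\{\omega_k\}_{k\ge1}$, define for $k\ge0$ \[ (I_n-A_0)Y_k=A_{-1}+\sum_{i=1}^{\infty}A_iX_k^{i+1},\qquad X_{k+1}=Y_k+\omega_{k+1}(I_n-A_0)^{-1}A_1\,(Y_k^2-X_k^2). \] If $\{\omega_k\}_{k\ge1}$ is eligible, then $\{X_k\}_{k\in\mathbb N}$ converges monotonically to $G$.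
   Context: $\mathbf e$ is the all-ones vector; inequalities between matrices/vectors are entrywise. The sequence $\{\omega_k\}_{k\ge1}$ is called eligible (for the iteration above) if $\omega_k\ge 0$ for all $k\ge1$ and, for all $k\ge 0$, with $X_k,Y_k,X_{k+1}$ generated by the iteration, \[ \omega_{k+1}A_1(Y_k^2-X_k^2)\le A_1(X_{k+1}^2-X_k^2)+\sum_{i=2}^{\infty}A_i(Y_k^{i+1}-X_k^{i+1}) \] and \[ X_{k+1}\mathbf e=Y_k\mathbf e+\omega_{k+1}(I_n-A_0)^{-1}A_1(Y_k^2-X_k^2)\mathbf e\le \mathbf e . \] *)

(* Defs.v *)
From HB Require Import structures.
From mathcomp Require Import all_boot all_order all_algebra.
From mathcomp Require Import all_classical all_reals all_analysis.
Set Implicit Arguments. Unset Strict Implicit. Unset Printing Implicit Defensive.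
Import Order.TTheory GRing.Theory Num.Theory.
Import numFieldNormedType.Exports.
Local Open Scope classical_set_scope.
Local Open Scope ring_scope.

Section Defs.
Context {R : realType}.

Definition mxle {p q : nat} (A B : 'M[R]_(p, q)) : Prop :=
  forall i j, A i j <= B i j.

Definition mx_series_cvg {p q : nat} (F : nat -> 'M[R]_(p, q)) (S : 'M[R]_(p, q)) : Prop :=
  forall i j, series (fun k => F k i j) @ \oo --> S i j.

Definition mx_series_sum {p q : nat} (F : nat -> 'M[R]_(p, q)) : 'M[R]_(p, q) :=
  \matrix_(i, j) limn (series (fun k => F k i j)).

Definition ones (n : nat) : 'cV[R]_n := const_mx 1.

(* irreducibility of a square matrix: there is no nonempty proper subset S of
   indices with A i j = 0 for all i in S, j not in S (i.e. A is not
   permutation-similar to a block triangular matrix) *)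
Definition irreducible_mx {n : nat} (A : 'M[R]_n) : Prop :=
  forall S : {set 'I_n}, S != finset.set0 -> S != [set: 'I_n]%SET ->
    exists i j, [/\ i \in S, j \notin S & A i j != 0].

Definition row_stochastic {n : nat} (A : 'M[R]_n) : Prop :=
  mxle 0 A /\ A *m ones n = ones n.

(* Index shift: Aext Am1 A k = A_{k-1}, where Am1 = A_{-1} and A i = A_i (i >= 0) *)
Definition Aext {n : nat} (Am1 : 'M[R]_n) (A : nat -> 'M[R]_n) (k : nat) : 'M[R]_n :=
  if k is k'.+1 then A k' else Am1.

Section Iteration.
Variables (n : nat) (Am1 : 'M[R]_n) (A : nat -> 'M[R]_n) (omega : nat -> R).

Definition invIA0 : 'M[R]_n := invmx (1%:M - A 0%N).

Definition Ystep (X : 'M[R]_n) : 'M[R]_n :=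
  invIA0 *m (Am1 + mx_series_sum (fun k => A k.+1 *m X ^+ k.+2)).

Definition Xnext (k : nat) (X : 'M[R]_n) : 'M[R]_n :=
  Ystep X + omega k.+1 *: (invIA0 *m A 1%N *m (Ystep X ^+ 2 - X ^+ 2)).

Fixpoint Xseq (k : nat) : 'M[R]_n :=
  if k is k'.+1 then Xnext k' (Xseq k') else 0.

Definition Yseq (k : nat) : 'M[R]_n := Ystep (Xseq k).

Definition eligible : Prop :=
  (forall k, (1 <= k)%N -> 0 <= omega k) /\
  forall k : nat,
    mxle (omega k.+1 *: (A 1%N *m (Yseq k ^+ 2 - Xseq k ^+ 2)))
         (A 1%N *m (Xseq k.+1 ^+ 2 - Xseq k ^+ 2)
          + mx_series_sum (fun m => A m.+2 *m (Yseq k ^+ m.+3 - Xseq k ^+ m.+3)))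
    /\ Xseq k.+1 *m ones n
         = Yseq k *m ones n
           + omega k.+1 *: (invIA0 *m A 1%N *m (Yseq k ^+ 2 - Xseq k ^+ 2) *m ones n)
    /\ mxle (Xseq k.+1 *m ones n) (ones n).

End Iteration.
End Defs.

(* Main.v *)
Require Import Defs.
From HB Require Import structures.
From mathcomp Require Import all_boot all_order all_algebra.
From mathcomp Require Import all_classical all_reals all_analysis.
From mathcomp Require Import ring lra.
Import Order.TTheory GRing.Theory Num.Theory.
Import numFieldNormedType.Exports.
Local Open Scope classical_set_scope.
Local Open Scope ring_scope.
Set Implicit Arguments. Unset Strict Implicit. Unset Printing Implicit Defensive.


Section RS.
Variable R : realType.
Implicit Types u v : nat -> R.

Definition cvgS u (s : R) := series u @ \oo --> s.

Lemma cvgS_lim u s : cvgS u s -> limn (series u) = s.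
Proof. by move=> H; apply: cvg_lim. Qed.

Lemma cvgS_ext u v s : (forall k, u k = v k) -> cvgS u s -> cvgS v s.
Proof. by move=> e; have -> : u = v by apply/funext. Qed.

Lemma cvgS_add u v s t : cvgS u s -> cvgS v t -> cvgS (fun k => u k + v k) (s + t).
Proof.
move=> Hu Hv; rewrite /cvgS.
have -> : series (fun k => u k + v k) = series u + series v.
  by apply/funext => N; rewrite /series /= big_split.
exact: cvgD.
Qed.

Lemma cvgS_opp u s : cvgS u s -> cvgS (fun k => - u k) (- s).
Proof.
move=> Hu; rewrite /cvgS.
have -> : series (fun k => - u k) = - series u.
  by apply/funext => N; rewrite /series /= sumrN.
exact: cvgN.
Qed.

Lemma cvgS_sub u v s t : cvgS u s -> cvgS v t -> cvgS (fun k => u k - v k) (s - t).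
Proof. by move=> Hu Hv; apply: cvgS_add => //; apply: cvgS_opp. Qed.

Lemma cvgS_scale a u s : cvgS u s -> cvgS (fun k => a * u k) (a * s).
Proof.
move=> Hu; rewrite /cvgS.
have -> : series (fun k => a * u k) = (fun N => a * series u N).
  by apply/funext => N; rewrite /series /= mulr_sumr.
exact: cvgMl_tmp.
Qed.

Lemma cvgS_0 : cvgS (fun _ => 0) 0.
Proof.
rewrite /cvgS.
have -> : series (fun _ : nat => 0 : R) = (fun _ => 0).
  by apply/funext => N; rewrite /series /= big1.
exact: cvg_cst.
Qed.

Lemma cvgS_big (I : Type) (r : seq I) (P : pred I) (U : I -> nat -> R) (s : I -> R) :
  (forall i, cvgS (U i) (s i)) ->
  cvgS (fun k => \sum_(i <- r | P i) U i k) (\sum_(i <- r | P i) s i).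
Proof.
move=> H; elim: r => [|a r IH].
  rewrite big_nil; apply: cvgS_ext cvgS_0 => k; by rewrite big_nil.
apply: (@cvgS_ext (fun k => if P a then U a k + \sum_(i <- r | P i) U i k
   else \sum_(i <- r | P i) U i k)) => [k|]; first by rewrite big_cons.
rewrite big_cons; case: (P a) => //; exact: cvgS_add.
Qed.

Lemma cvgS_le u v s t : (forall k, u k <= v k) -> cvgS u s -> cvgS v t -> s <= t.
Proof.
move=> le Hu Hv; apply: (ler_cvg_to Hu Hv); apply: nearW => N.
by rewrite /series /=; apply: ler_sum => k _.
Qed.

Lemma cvgS_shift u s : cvgS u s -> cvgS (fun k => u k.+1) (s - u 0%N).
Proof.
move=> Hu; rewrite /cvgS.
have -> : series (fun k => u k.+1) = (fun N => series u N.+1 - u 0%N).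
  apply/funext => N; rewrite /series /= big_nat_recl // addrC addKr.
  by [].
apply: cvgB; last exact: cvg_cst.
by rewrite (cvg_shiftS (series u)).
Qed.

Lemma cvgS_unshift u t : cvgS (fun k => u k.+1) t -> cvgS u (u 0%N + t).
Proof.
move=> Hu; rewrite /cvgS -(cvg_shiftS (series u)).
have -> : [sequence series u n.+1]_n = (fun N => u 0%N + series (fun k => u k.+1) N).
  apply/funext => N; by rewrite /series /= big_nat_recl.
apply: cvgD => //; exact: cvg_cst.
Qed.

Lemma cvgS_dom u v t : (forall k, 0 <= u k) -> (forall k, u k <= v k) ->
  cvgS v t -> cvgS u (limn (series u)).
Proof.
move=> u0 le Hv.
apply: (@series_le_cvg R u v) => // [k|]; first exact: le_trans (le k).
exact: cvgP Hv.
Qed.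

Lemma cvgS_partial u s : (forall k, 0 <= u k) -> cvgS u s -> forall N, series u N <= s.
Proof.
move=> u0 H N; rewrite -(cvgS_lim H).
apply: nondecreasing_cvgn_le; last exact: cvgP H.
by apply: nondecreasing_series => k _.
Qed.

Lemma cvgS_term_le u s : (forall k, 0 <= u k) -> cvgS u s -> forall k, u k <= s.
Proof.
move=> u0 H k; apply: le_trans (cvgS_partial u0 H k.+1).
rewrite /series /= big_nat_recr //=; rewrite lerDr; exact: sumr_ge0.
Qed.

End RS.
Arguments cvgS_scale {R} a {u s} _.


Section MS.
Variable R : realType.

Lemma mxle0E p q (X : 'M[R]_(p, q)) : mxle 0 X <-> forall i j, 0 <= X i j.
Proof. by split => H i j; move: (H i j); rewrite mxE. Qed.

Section Order.
Variables p q r : nat.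
Implicit Types X Y Z : 'M[R]_(p, q).

Lemma mxle_refl X : mxle X X.
Proof. by move=> i j. Qed.

Lemma mxle_trans X Y Z : mxle X Y -> mxle Y Z -> mxle X Z.
Proof. by move=> H1 H2 i j; exact: le_trans (H1 i j) (H2 i j). Qed.

Lemma mxle_add X Y X' Y' : mxle X Y -> mxle X' Y' -> mxle (X + X') (Y + Y').
Proof. by move=> H1 H2 i j; rewrite !mxE; apply: lerD. Qed.

Lemma mxle_subr0 X Y : mxle 0 (Y - X) <-> mxle X Y.
Proof.
split=> H i j; move: (H i j); by rewrite !mxE subr_ge0.
Qed.

Lemma mxle_scale a X : 0 <= a -> mxle 0 X -> mxle 0 (a *: X).
Proof. by move=> a0 /mxle0E H; apply/mxle0E => i j; rewrite !mxE mulr_ge0. Qed.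

Lemma mxle_mul0 (A : 'M[R]_(r, p)) X : mxle 0 A -> mxle 0 X -> mxle 0 (A *m X).
Proof.
move=> /mxle0E HA /mxle0E HX; apply/mxle0E => i j; rewrite mxE.
by apply: sumr_ge0 => l _; apply: mulr_ge0.
Qed.

Lemma mxle_mull (A : 'M[R]_(r, p)) X Y : mxle 0 A -> mxle X Y -> mxle (A *m X) (A *m Y).
Proof.
move=> /mxle0E HA H i j; rewrite !mxE; apply: ler_sum => l _.
by apply: ler_wpM2l.
Qed.

Lemma mxle_mulr (C : 'M[R]_(q, r)) X Y : mxle 0 C -> mxle X Y -> mxle (X *m C) (Y *m C).
Proof.
move=> /mxle0E HC H i j; rewrite !mxE; apply: ler_sum => l _.
by apply: ler_wpM2r.
Qed.

End Order.

Lemma mxle_mul2 p q r (A B : 'M[R]_(p, q)) (C D : 'M[R]_(q, r)) :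
  mxle 0 A -> mxle 0 C -> mxle A B -> mxle C D -> mxle (A *m C) (B *m D).
Proof.
move=> A0 C0 AB CD; apply: mxle_trans (mxle_mull A0 CD) _.
apply: mxle_mulr AB; exact: mxle_trans C0 CD.
Qed.

Lemma mxle_exp0 n (X : 'M[R]_n) m : mxle 0 X -> mxle 0 (X ^+ m).
Proof.
move=> X0; elim: m => [|m IH].
  by apply/mxle0E => i j; rewrite expr0 mxE; case: (i == j).
by rewrite exprS; apply: mxle_mul0.
Qed.

Lemma mxle_exp n (X Y : 'M[R]_n) m : mxle 0 X -> mxle X Y -> mxle (X ^+ m) (Y ^+ m).
Proof.
move=> X0 XY; elim: m => [|m IH]; first exact: mxle_refl.
by rewrite !exprS; apply: mxle_mul2 => //; apply: mxle_exp0.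
Qed.

Section Series.
Variables p q : nat.
Implicit Types F G : nat -> 'M[R]_(p, q).

Lemma mxS_cvgS F S i j : mx_series_cvg F S -> cvgS (fun k => F k i j) (S i j).
Proof. by move=> H; apply: H. Qed.

Lemma mxS_sum F S : mx_series_cvg F S -> mx_series_sum F = S.
Proof. by move=> H; apply/matrixP => i j; rewrite mxE; apply: cvgS_lim; apply: H. Qed.

Lemma mxS_ext F G S : (forall k, F k = G k) -> mx_series_cvg F S -> mx_series_cvg G S.
Proof. by move=> e; have -> : F = G by apply/funext. Qed.

Lemma mxS_add F G S T : mx_series_cvg F S -> mx_series_cvg G T ->
  mx_series_cvg (fun k => F k + G k) (S + T).
Proof.
move=> H1 H2 i j; rewrite mxE.
apply: (@cvgS_ext _ (fun k => F k i j + G k i j)) => [k|]; first by rewrite mxE.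
exact: cvgS_add (H1 i j) (H2 i j).
Qed.

Lemma mxS_opp F S : mx_series_cvg F S -> mx_series_cvg (fun k => - F k) (- S).
Proof.
move=> H1 i j; rewrite mxE.
apply: (@cvgS_ext _ (fun k => - F k i j)) => [k|]; first by rewrite mxE.
exact: cvgS_opp (H1 i j).
Qed.

Lemma mxS_sub F G S T : mx_series_cvg F S -> mx_series_cvg G T ->
  mx_series_cvg (fun k => F k - G k) (S - T).
Proof. by move=> H1 H2; apply: mxS_add H1 (mxS_opp H2). Qed.

Lemma mxS_scale a F S : mx_series_cvg F S -> mx_series_cvg (fun k => a *: F k) (a *: S).
Proof.
move=> H1 i j; rewrite mxE.
apply: (@cvgS_ext _ (fun k => a * F k i j)) => [k|]; first by rewrite mxE.
exact: cvgS_scale (H1 i j).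
Qed.

Lemma mxS_0 : mx_series_cvg (fun _ => 0 : 'M[R]_(p, q)) 0.
Proof.
move=> i j; rewrite mxE; apply: (@cvgS_ext _ (fun _ => 0)) => [k|]; first by rewrite /= ?mxE.
exact: cvgS_0.
Qed.

Lemma mxS_mull r (C : 'M[R]_(r, p)) F S : mx_series_cvg F S ->
  mx_series_cvg (fun k => C *m F k) (C *m S).
Proof.
move=> H i j; rewrite mxE.
apply: (@cvgS_ext _ (fun k => \sum_(l < p) C i l * F k l j)) => [k|]; first by rewrite mxE.
apply: cvgS_big => l; exact: cvgS_scale (H l j).
Qed.

Lemma mxS_mulr r (C : 'M[R]_(q, r)) F S : mx_series_cvg F S ->
  mx_series_cvg (fun k => F k *m C) (S *m C).
Proof.
move=> H i j; rewrite mxE.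
apply: (@cvgS_ext _ (fun k => \sum_(l < q) C l j * F k i l)) => [k|].
  by rewrite mxE; apply: eq_bigr => l _; rewrite mulrC.
apply: (@cvgS_ext _ (fun k => \sum_(l < q) C l j * F k i l)) => [k|] //.
have -> : \sum_(l < q) S i l * C l j = \sum_(l < q) C l j * S i l.
  by apply: eq_bigr => l _; rewrite mulrC.
apply: cvgS_big => l; exact: cvgS_scale (H i l).
Qed.

Lemma mxS_shift F S : mx_series_cvg F S -> mx_series_cvg (fun k => F k.+1) (S - F 0%N).
Proof. by move=> H i j; rewrite !mxE; exact: cvgS_shift (H i j). Qed.

Lemma mxS_unshift F T : mx_series_cvg (fun k => F k.+1) T -> mx_series_cvg F (F 0%N + T).
Proof. by move=> H i j; rewrite !mxE; exact: cvgS_unshift (H i j). Qed.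

Lemma mxS_le F G S T : (forall k, mxle (F k) (G k)) ->
  mx_series_cvg F S -> mx_series_cvg G T -> mxle S T.
Proof. by move=> le H1 H2 i j; apply: cvgS_le (H1 i j) (H2 i j) => k; apply: le. Qed.

Lemma mxS_dom F G T : (forall k, mxle 0 (F k)) -> (forall k, mxle (F k) (G k)) ->
  mx_series_cvg G T -> mx_series_cvg F (mx_series_sum F).
Proof.
move=> F0 le H i j; rewrite mxE.
apply: (@cvgS_dom _ _ (fun k => G k i j) (T i j)) => [k|k|]; last exact: H.
  by move: (F0 k i j); rewrite mxE.
exact: le.
Qed.

Lemma mxS_term_le F S : (forall k, mxle 0 (F k)) -> mx_series_cvg F S ->
  forall k, mxle (F k) S.
Proof.
move=> F0 H k i j; apply: (@cvgS_term_le _ (fun k => F k i j)) => [l|]; last exact: H.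
by move: (F0 l i j); rewrite mxE.
Qed.

Lemma mxS_ge0 F S : (forall k, mxle 0 (F k)) -> mx_series_cvg F S -> mxle 0 S.
Proof. by move=> F0 H; apply: mxle_trans (F0 0%N) (mxS_term_le F0 H 0%N). Qed.

End Series.
End MS.
Arguments mxS_cvgS {R p q F S} i j _.
Arguments mxS_mulr {R p q r} C {F S} _.
Arguments mxS_mull {R p q r} C {F S} _.
Arguments mxS_scale {R p q} a {F S} _.


Lemma exists_argmin (R : realType) (I : finType) (i0 : I) (F : I -> R) :
  exists i, forall j, F i <= F j.
Proof.
case: (@arg_minP _ _ I i0 xpredT F isT) => i _ H; exists i => j; exact: H.
Qed.

Section MaxPrin.
Variable R : realType.
Variable n : nat.
Variable Asum : 'M[R]_n.
Hypothesis Hirr : irreducible_mx Asum.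
Hypothesis Hsto : row_stochastic Asum.

Lemma rowsum1 i : \sum_l Asum i l = 1.
Proof.
case: Hsto => _ /matrixP /(_ i 0) ; rewrite !mxE => <-.
by apply: eq_bigr => l _; rewrite mxE mulr1.
Qed.

Lemma Asum_ge0 i j : 0 <= Asum i j.
Proof. by case: Hsto => /mxle0E H _. Qed.

Lemma maxprin (B : 'M[R]_n) (x y : 'cV[R]_n) (i0 : 'I_n) :
  mxle 0 B -> mxle B Asum -> mxle 0 y -> x = B *m x + y -> x i0 0 < 0 ->
  (forall i j, B i j = Asum i j) /\ (forall i, x i 0 = x i0 0).
Proof.
move=> /mxle0E B0 BA /mxle0E y0 Ex xi0.
have [i1 Hi1] := exists_argmin i0 (fun i => x i 0).
set m := x i1 0 in Hi1.
have m0 : m < 0 by apply: le_lt_trans (Hi1 i0) xi0.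
pose S := [set i | x i 0 == m]%SET.
have key : forall i, i \in S -> (forall l, B i l = Asum i l) /\
                              (forall l, Asum i l != 0 -> l \in S).
  move=> i; rewrite inE => /eqP xim.
  have E1 : x i 0 = \sum_l B i l * x l 0 + y i 0.
    by rewrite {1}Ex !mxE.
  have E2 : \sum_l B i l * x l 0 = \sum_l B i l * (x l 0 - m) + m * \sum_l B i l.
    rewrite mulr_sumr -big_split /=; apply: eq_bigr => l _; ring.
  have sB : \sum_l B i l <= 1.
    by rewrite -(rowsum1 i); apply: ler_sum => l _; apply: BA.
  have T0 : forall l, 0 <= B i l * (x l 0 - m).
    by move=> l; apply: mulr_ge0 => //; rewrite subr_ge0.
  have S0 : 0 <= \sum_l B i l * (x l 0 - m) by apply: sumr_ge0 => l _.
  have ineq : \sum_l B i l * (x l 0 - m) + m * \sum_l B i l <= m.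
    by rewrite -E2 -xim E1 lerDl.
  have hB : \sum_l B i l = 1.
    apply/eqP; rewrite eq_le sB /=.
    have : m * \sum_l B i l <= m by apply: le_trans ineq; rewrite lerDr.
    by rewrite -{2}(mulr1 m) ler_nM2l.
  have hT : \sum_l B i l * (x l 0 - m) = 0.
    apply/eqP; rewrite eq_le S0 andbT.
    by move: ineq; rewrite hB mulr1 gerDr.
  have rowEq : forall l, B i l = Asum i l.
    have : \sum_l (Asum i l - B i l) = 0 by rewrite sumrB rowsum1 hB subrr.
    move/psumr_eq0P => H l; apply/eqP; rewrite eq_sym -subr_eq0; apply/eqP.
    by apply: H => // k _; rewrite subr_ge0; apply: BA.
  split=> // l Al; rewrite inE.
  have := @psumr_eq0P _ _ _ _ (fun k _ => T0 k) hT l isT.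
  move/eqP; rewrite mulf_eq0 rowEq (negbTE Al) /= subr_eq0 => H; exact: H.
have ST : S = [set: 'I_n]%SET.
  apply/eqP; apply: contraT => Sn.
  have S1 : S != finset.set0 by apply/finset.set0Pn; exists i1; rewrite inE.
  have [i [j [iS jS Aij]]] := Hirr S1 Sn.
  by move: jS; rewrite ((key i iS).2 j Aij).
have allS i : i \in S by rewrite ST inE.
split.
  by move=> i j; apply: (key i (allS i)).1.
move=> i; move: (allS i) (allS i0); rewrite !inE => /eqP -> /eqP ->; by [].
Qed.
End MaxPrin.


Section InvNonneg.
Variable R : realType.
Variable n : nat.
Variable Asum : 'M[R]_n.
Hypothesis Hirr : irreducible_mx Asum.
Hypothesis Hsto : row_stochastic Asum.
Variable B : 'M[R]_n.
Hypothesis B0 : mxle 0 B.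
Hypothesis BA : mxle B Asum.
Hypothesis BnA : exists i j, B i j != Asum i j.

Lemma IB_pos p (X : 'M[R]_(n, p)) : mxle 0 ((1 - B) *m X) -> mxle 0 X.
Proof.
move=> /mxle0E H; apply/mxle0E => i j; rewrite leNgt; apply/negP => Xneg.
pose x := \col_k X k j.
pose y := \col_k ((1 - B) *m X) k j.
have Ex : x = B *m x + y.
  have EY : (1 - B) *m X = X - B *m X by rewrite mulmxBl mul1mx.
  apply/matrixP => k l; rewrite /y EY !mxE.
  have -> : \sum_j0 B k j0 * x j0 l = \sum_j0 B k j0 * X j0 j.
    by apply: eq_bigr => m _; rewrite mxE.
  ring.
have y0 : mxle 0 y by apply/mxle0E => k l; rewrite mxE; apply: H.
have xi : x i 0 < 0 by rewrite mxE.
have [Heq _] := maxprin Hirr Hsto B0 BA y0 Ex xi.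
case: BnA => a [b /eqP]; apply; exact: Heq.
Qed.

Lemma IB_unit : (1 - B) \in unitmx.
Proof.
rewrite unitmxE unitfE -det_tr; apply/negP => /det0P [v vn0 vE].
have Hx : (1 - B) *m v^T = 0 by apply: trmx_inj; rewrite trmx_mul trmxK vE trmx0.
have P1 : mxle 0 v^T by apply: IB_pos; rewrite Hx; apply: mxle_refl.
have P2 : mxle 0 (- v^T) by apply: IB_pos; rewrite mulmxN Hx oppr0; apply: mxle_refl.
move/eqP: vn0; apply; apply/matrixP => i j.
move: (P1 j i) (P2 j i); rewrite !mxE => a b; apply/eqP; rewrite eq_le.
by rewrite -oppr_ge0 b a.
Qed.

Lemma IB_inv_pos p (Y : 'M[R]_(n, p)) : mxle 0 Y -> mxle 0 (invmx (1 - B) *m Y).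
Proof.
move=> Y0; apply: IB_pos; by rewrite mulmxA mulmxV ?mul1mx // IB_unit.
Qed.

End InvNonneg.


Section Lim.
Variable R : realType.

Lemma cvg_bigsumS (I : Type) (r : seq I) (P : pred I) (U : I -> nat -> R) (s : I -> R) :
  (forall i, U i @ \oo --> s i) ->
  (fun k => \sum_(i <- r | P i) U i k) @ \oo --> \sum_(i <- r | P i) s i.
Proof.
move=> H; elim: r => [|a r IH].
  rewrite big_nil; have -> : (fun k => \sum_(i <- [::] | P i) U i k) = (fun _ => 0).
    by apply/funext => k; rewrite big_nil.
  exact: cvg_cst.
have -> : (fun k => \sum_(i <- a :: r | P i) U i k) =
   (fun k => if P a then U a k + \sum_(i <- r | P i) U i k
             else \sum_(i <- r | P i) U i k).
  by apply/funext => k; rewrite big_cons.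
rewrite big_cons; case: (P a) => //; exact: cvgD.
Qed.

Definition mxlim p q (P : nat -> 'M[R]_(p, q)) (L : 'M[R]_(p, q)) :=
  forall i j, (fun k => P k i j) @ \oo --> L i j.

Lemma mxlim_cst p q (L : 'M[R]_(p, q)) : mxlim (fun _ => L) L.
Proof. move=> i j; exact: cvg_cst. Qed.

Lemma mxlim_mul p q r (P : nat -> 'M[R]_(p, q)) (Q : nat -> 'M[R]_(q, r)) L M :
  mxlim P L -> mxlim Q M -> mxlim (fun k => P k *m Q k) (L *m M).
Proof.
move=> HP HQ i j; rewrite mxE.
have -> : (fun k => (P k *m Q k) i j) = (fun k => \sum_(l < q) P k i l * Q k l j).
  by apply/funext => k; rewrite mxE.
apply: (@cvg_bigsumS _ _ _ (fun l k => P k i l * Q k l j)) => l.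
exact: cvgM (HP i l) (HQ l j).
Qed.

Lemma mxlim_exp n (P : nat -> 'M[R]_n) L m : mxlim P L -> mxlim (fun k => P k ^+ m) (L ^+ m).
Proof.
move=> H; elim: m => [|m IH]; first exact: mxlim_cst.
have E : forall X : 'M[R]_n, X *m X ^+ m = X ^+ m.+1 by move=> X; rewrite exprS mulmxE.
have := mxlim_mul H IH.
have -> : (fun k => P k *m P k ^+ m) = (fun k => P k ^+ m.+1) by apply/funext => k; rewrite E.
by rewrite E.
Qed.

Lemma mxlim_add p q (P Q : nat -> 'M[R]_(p, q)) L M :
  mxlim P L -> mxlim Q M -> mxlim (fun k => P k + Q k) (L + M).
Proof.
move=> HP HQ i j; rewrite mxE.
have -> : (fun k => (P k + Q k) i j) = (fun k => P k i j + Q k i j).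
  by apply/funext => k; rewrite mxE.
exact: cvgD.
Qed.

Lemma mxlim_opp p q (P : nat -> 'M[R]_(p, q)) L : mxlim P L -> mxlim (fun k => - P k) (- L).
Proof.
move=> HP i j; rewrite mxE.
have -> : (fun k => (- P k) i j) = (fun k => - P k i j).
  by apply/funext => k; rewrite mxE.
exact: cvgN.
Qed.

End Lim.
Lemma mxlimE (R : realType) p q (P : nat -> 'M[R]_(p, q)) L (H : mxlim P L) (i : 'I_p) (j : 'I_q) :
  (fun k => P k i j) @ \oo --> L i j.
Proof. exact: H. Qed.
Arguments mxlimE {R p q P L} H i j.


Lemma cvgS_two (R : realType) (u : nat -> R) s a b : (forall k, 0 <= u k) -> cvgS u s ->
  a != b -> u a + u b <= s.
Proof.
move=> u0 H ab; apply: le_trans (cvgS_partial u0 H (maxn a b).+1).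
rewrite /series /= big_mkord.
have ha : (a < (maxn a b).+1)%N by rewrite ltnS leq_maxl.
have hb : (b < (maxn a b).+1)%N by rewrite ltnS leq_maxr.
rewrite (bigD1 (Ordinal ha)) //= lerD2l.
rewrite (bigD1 (Ordinal hb)) /=; last by rewrite -val_eqE /= eq_sym.
by rewrite lerDl; apply: sumr_ge0.
Qed.

Section Main.
Variable R : realType.
Variable n : nat.
Variables (Am1 : 'M[R]_n) (A : nat -> 'M[R]_n) (Asum M1 : 'M[R]_n) (v : 'rV[R]_n).
Variables (G : 'M[R]_n) (omega : nat -> R).
Hypothesis H0 : forall k, mxle 0 (Aext Am1 A k).
Hypothesis HA : mx_series_cvg (Aext Am1 A) Asum.
Hypothesis Hirr : irreducible_mx Asum.
Hypothesis Hsto : row_stochastic Asum.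
Hypothesis HM : mx_series_cvg (fun k => ((k%:Z - 1)%:~R : R) *: Aext Am1 A k) M1.
Hypothesis Hv : forall j, 0 < v 0 j.
Hypothesis HvA : v *m Asum = v.
Hypothesis Hve : (v *m ones n) 0 0 = 1.
Hypothesis Heta : (v *m (M1 *m ones n)) 0 0 < 0.

Notation Ax := (Aext Am1 A).
Notation e := (ones n).
Definition w := M1 *m e.
Definition eta := (v *m w) 0 0.

Lemma eta_lt0 : eta < 0. Proof. exact: Heta. Qed.

Lemma Asum_e : Asum *m e = e. Proof. by case: Hsto. Qed.

Lemma A0_le : mxle (A 0%N) Asum.
Proof. exact: (mxS_term_le H0 HA 1%N). Qed.

Lemma A0_ge0 : mxle 0 (A 0%N).
Proof. exact: (H0 1%N). Qed.

Lemma A0_ne : exists i j, A 0%N i j != Asum i j.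
Proof.
case: (pselect (exists i j, A 0%N i j != Asum i j)) => // Hn; exfalso.
have E i j : A 0%N i j = Asum i j.
  by apply/eqP; apply/negPn/negP => H; apply: Hn; exists i, j.
have Z k i j : (k != 1)%N -> Ax k i j = 0.
  move=> k1; have u0 : forall l, 0 <= Ax l i j by move=> l; move: (H0 l i j); rewrite mxE.
  have := cvgS_two u0 (mxS_cvgS i j HA) k1; rewrite /= E gerDr => le0.
  by apply/eqP; rewrite eq_le le0 u0.
have M0 : M1 = 0.
  apply/matrixP => i j; rewrite mxE.
  have h1 := mxS_cvgS i j HM.
  have h2 : cvgS (fun k => ((((k%:Z - 1)%:~R : R) *: Ax k) i j)) 0.
    apply: (@cvgS_ext R (fun _ => 0)); last exact: cvgS_0.
    move=> k; rewrite mxE.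
    case: (eqVneq k 1%N) => [->|k1]; first by rewrite subrr mul0r.
    by rewrite Z // mulr0.
  by rewrite -(cvgS_lim h1) (cvgS_lim h2).
move: Heta; rewrite M0 mul0mx mulmx0 mxE ltxx //.
Qed.


Lemma v_const (x : 'cV[R]_n) a : (forall i, x i 0 = a) -> (v *m x) 0 0 = a.
Proof.
move=> H; move: Hve; rewrite !mxE => He.
rewrite -[RHS]mulr1 -He mulr_sumr; apply: eq_bigr => j _.
by rewrite H ?mxE ?mulr1 mulrC.
Qed.

Lemma harm_zero (x : 'cV[R]_n) : x = Asum *m x -> (v *m x) 0 0 = 0 -> x = 0.
Proof.
move=> Ex vx.
have y0 : mxle 0 (0 : 'cV[R]_n) by apply: mxle_refl.
have AA : mxle Asum Asum by apply: mxle_refl.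
have As0 : mxle 0 Asum by case: Hsto.
have pos : forall z : 'cV[R]_n, z = Asum *m z -> (v *m z) 0 0 = 0 -> forall i, 0 <= z i 0.
  move=> z Ez vz i; rewrite leNgt; apply/negP => zi.
  have Ez' : z = Asum *m z + 0 by rewrite addr0.
  have [_ Hc] := maxprin Hirr Hsto As0 AA y0 Ez' zi.
  move: vz; rewrite (v_const Hc) => vz; move: zi; by rewrite vz ltxx.
apply/matrixP => i j; rewrite (ord1 j) mxE; apply/eqP; rewrite eq_le pos //.
have vx' : (v *m - x) 0 0 = 0.
  move: vx; rewrite !mxE => vx.
  rewrite (eq_bigr (fun j => - (v 0 j * x j 0))) ?sumrN ?vx ?oppr0 // => k _.
  by rewrite mxE mulrN.
have Ex' : - x = Asum *m - x by rewrite mulmxN -Ex.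
have := pos (- x) Ex' vx' i; rewrite mxE oppr_ge0 => ->; by [].
Qed.

Lemma mx11E (a : 'M[R]_1) : a = (a 0 0)%:M.
Proof. by apply/matrixP => i j; rewrite (ord1 i) (ord1 j) !mxE. Qed.

Lemma ve1 : v *m e = 1%:M.
Proof. by rewrite (mx11E (v *m e)) Hve. Qed.

Definition Zmx := 1%:M - Asum + e *m v.

Lemma vZ : v *m Zmx = v.
Proof.
rewrite /Zmx !mulmxDr mulmxN mulmx1 HvA mulmxA ve1 mul1mx.
by rewrite subrr add0r.
Qed.

Lemma Z_unit : Zmx \in unitmx.
Proof.
rewrite unitmxE unitfE -det_tr; apply/negP => /det0P [u un0 uE].
have Hx : Zmx *m u^T = 0 by apply: trmx_inj; rewrite trmx_mul trmxK uE trmx0.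
have vx : v *m u^T = 0 by rewrite -vZ -mulmxA Hx mulmx0.
have Ex : u^T = Asum *m u^T.
  move: Hx; rewrite /Zmx !mulmxDl mulNmx mul1mx -mulmxA vx mulmx0 addr0.
  by move/eqP; rewrite subr_eq0 => /eqP.
have := harm_zero Ex; rewrite vx mxE => /(_ erefl) => u0.
by move/eqP: un0; apply; rewrite -[u]trmxK u0 trmx0.
Qed.

Lemma poisson : exists c : 'cV[R]_n, mxle 0 c /\ Asum *m c + w = c + eta *: e.
Proof.
pose c0 := invmx Zmx *m (w - eta *: e).
have Zc : Zmx *m c0 = w - eta *: e by rewrite mulmxA mulmxV ?mul1mx // Z_unit.
have vc : v *m c0 = 0.
  have : v *m c0 = v *m (w - eta *: e) by rewrite -Zc mulmxA vZ.
  rewrite mulmxBr -scalemxAr ve1 => ->.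
  apply/matrixP => i j; rewrite (ord1 i) (ord1 j) !mxE /= mulr1 /eta mxE subrr //.
have Pc0 : Asum *m c0 + w = c0 + eta *: e.
  move: Zc; rewrite /Zmx !mulmxDl mulNmx mul1mx -mulmxA vc mulmx0 addr0 => H.
  rewrite -[w](subrK (eta *: e)) -H.
  by rewrite addrA [Asum *m c0 + _]addrC subrK.
clearbody c0.
pose K := \sum_i `|c0 i 0|.
exists (c0 + K *: e); split.
  apply/mxle0E => i j; rewrite (ord1 j) !mxE mulr1.
  have : `|c0 i 0| <= K.
    by rewrite /K (bigD1 i) //= lerDl; apply: sumr_ge0 => k _.
  move=> h1; have h2 := ler_norm (- c0 i 0); rewrite normrN in h2.
  lra.
rewrite mulmxDr -scalemxAr Asum_e.
by rewrite [LHS]addrAC Pc0 [RHS]addrAC.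
Qed.


Section GStoch.
Variable c : 'cV[R]_n.
Hypothesis Hc0 : mxle 0 c.
Hypothesis Hpc : Asum *m c + w = c + eta *: e.
Hypothesis HG0 : mxle 0 G.
Hypothesis HG : mx_series_cvg (fun k => Ax k *m G ^+ k) G.

Definition pv (l : nat) : 'cV[R]_n := e - G ^+ l *m e.
Definition fv (l : nat) : 'cV[R]_n := l%:R *: e + c.
Definition hv (eps : R) (l : nat) : 'cV[R]_n := pv l - eps *: fv l.

Lemma series_p m : mx_series_cvg (fun k => Ax k *m pv (m + k)) (pv m.+1).
Proof.
have H1 := mxS_mulr (G ^+ m *m e) HG.
have H2 := mxS_mulr e HA.
have H3 := mxS_sub H2 H1.
have E1 : G *m G ^+ m = G ^+ m.+1 by rewrite exprS mulmxE.
rewrite Asum_e mulmxA E1 in H3.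
apply: mxS_ext H3 => k.
have EG : G ^+ (m + k) = G ^+ k *m G ^+ m by rewrite addnC exprD mulmxE.
by rewrite /pv mulmxBr EG !mulmxA.
Qed.

Lemma series_f m : mx_series_cvg (fun k => Ax k *m fv (m + k)) (fv m.+1 + eta *: e).
Proof.
have H1 := mxS_scale (m.+1)%:R (mxS_mulr e HA).
have H2 := mxS_mulr e HM.
have H3 := mxS_mulr c HA.
have H4 := mxS_add (mxS_add H1 H2) H3.
have -> : fv m.+1 + eta *: e = (m.+1)%:R *: (Asum *m e) + M1 *m e + Asum *m c.
  rewrite /fv Asum_e -[M1 *m e]/w -!addrA; congr (_ + _); by rewrite -Hpc addrC.
apply: mxS_ext H4 => k.
rewrite /fv mulmxDr -scalemxAr -scalemxAl -scalerDl.
congr (_ *: _ + _); rewrite intrB natrD /=; ring.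
Qed.

Lemma series_h eps m :
  mx_series_cvg (fun k => Ax k *m hv eps (m + k)) (hv eps m.+1 - (eps * eta) *: e).
Proof.
have H := mxS_sub (@series_p m) (mxS_scale eps (@series_f m)).
have -> : hv eps m.+1 - (eps * eta) *: e = pv m.+1 - eps *: (fv m.+1 + eta *: e).
  by rewrite /hv [in RHS]scalerDr scalerA opprD addrA.
apply: mxS_ext H => k; by rewrite /hv [in RHS]mulmxBr -[in RHS]scalemxAr.
Qed.

Lemma pv_le1 l i : pv l i 0 <= 1.
Proof.
have H : mxle 0 (G ^+ l *m e).
  apply: mxle_mul0; first exact: mxle_exp0.
  by apply/mxle0E => a b; rewrite mxE.
rewrite /pv; move: (G ^+ l *m e) H => q /mxle0E/(_ i 0) H.
by rewrite !mxE gerDl oppr_le0.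
Qed.

Lemma pv0 : pv 0 = 0.
Proof. by rewrite /pv expr0 mul1mx subrr. Qed.

Lemma hv_bound eps l i : 0 < eps -> hv eps l i 0 <= 1 - eps * l%:R.
Proof.
move=> e0; have pl := pv_le1 l i; have ci := Hc0 i 0; rewrite mxE in ci.
rewrite /hv; move: (pv l) pl => P pl.
have ec : 0 <= eps * c i 0 by apply: mulr_ge0 => //; apply: ltW.
rewrite /fv !mxE mulr1 mulrDr; lra.
Qed.

Lemma row_bound (B : 'M[R]_n) (x : 'cV[R]_n) i H :
  mxle 0 B -> (forall j, x j 0 <= H) -> (B *m x) i 0 <= H * (B *m e) i 0.
Proof.
move=> /mxle0E B0 Hx; rewrite !mxE mulr_sumr; apply: ler_sum => j _.
by rewrite mxE mulr1 [H * _]mulrC; apply: ler_wpM2l.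
Qed.

Lemma ones_entry i (j : 'I_1) : (ones n : 'cV[R]_n) i j = 1.
Proof. by rewrite mxE. Qed.

Lemma entry_sub_scale (X : 'cV[R]_n) a i : (X - a *: e) i 0 = X i 0 - a.
Proof. by rewrite !mxE mulr1. Qed.

Lemma hv0 eps i : 0 < eps -> hv eps 0 i 0 <= 0.
Proof.
move=> e0; rewrite /hv pv0 /fv.
have ci := Hc0 i 0; rewrite mxE in ci.
rewrite !mxE /= mul0r !add0r oppr_le0; apply: mulr_ge0 => //; exact: ltW.
Qed.

Lemma hv_le0 eps l i : 0 < eps -> hv eps l i 0 <= 0.
Proof.
move=> e0; rewrite leNgt; apply/negP => hpos.
pose L := Num.Def.archi_bound (1 / eps).
have HL : 1 / eps < L%:R by apply: archi_boundP; rewrite divr_ge0 // ltW.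
have HL' : 1 < L%:R * eps by rewrite -ltr_pdivrMr.
have big : forall l' i', (L <= l')%N -> hv eps l' i' 0 <= 0.
  move=> l' i' Ll; apply: le_trans (hv_bound l' i' e0) _.
  have : L%:R <= l'%:R :> R by rewrite ler_nat.
  move=> h; nra.
have lL : (l < L)%N.
  rewrite ltnNge; apply/negP => H; move: (big l i H); by rewrite leNgt hpos.
have [[ls js] Hmax] := exists_argmin (Ordinal lL, i) (fun q : 'I_L * 'I_n => - hv eps q.1 q.2 0).
have Hall : forall l' i', hv eps l' i' 0 <= hv eps ls js 0.
  move=> l' i'; case: (ltnP l' L) => [lt|ge].
    by have := Hmax (Ordinal lt, i'); rewrite /= lerN2.
  apply: le_trans (big l' i' ge) _.
  apply: le_trans (ltW hpos) _.
  by have := Hmax (Ordinal lL, i); rewrite /= lerN2.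
have Hpos : 0 < hv eps ls js 0 by apply: lt_le_trans hpos (Hall _ _).
clear Hmax; move: Hall Hpos; case: ls => ls' lsL /=.
case: ls' lsL => [|m] _ Hall Hpos.
  by move: (hv0 js e0); rewrite leNgt Hpos.
set H := hv eps m.+1 js 0 in Hall Hpos.
have S1 := mxS_cvgS js 0 (@series_h eps m).
have S2 := cvgS_scale H (mxS_cvgS js 0 (mxS_mulr e HA)).
have := cvgS_le _ S1 S2.
rewrite entry_sub_scale Asum_e ones_entry mulr1 -/H.
have ee : eps * eta < 0 by rewrite pmulr_rlt0 // eta_lt0.
have : forall k, (Ax k *m hv eps (m + k)) js 0 <= H * (Ax k *m e) js 0.
  by move=> k; apply: row_bound => // j; apply: Hall.
move=> hk /(_ hk); lra.
Qed.

Lemma Ge_ge i : 1 <= (G *m e) i 0.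
Proof.
rewrite leNgt; apply/negP => lt.
set P := 1 - (G *m e) i 0.
have P0 : 0 < P by rewrite subr_gt0.
have ci := Hc0 i 0; rewrite mxE in ci.
set C := 1 + c i 0.
have C0 : 0 < C by rewrite /C; lra.
have eps0 : 0 < P / (2 * C) by rewrite divr_gt0 // mulr_gt0.
have := hv_le0 1 i eps0.
have -> : hv (P / (2 * C)) 1 i 0 = P - P / (2 * C) * C.
  rewrite /hv /pv /fv expr1 /P /C !mxE /=; ring.
have -> : P / (2 * C) * C = P / 2.
  field; by rewrite lt0r_neq0.
lra.
Qed.

End GStoch.

Section Iter.
Hypothesis Hel : eligible Am1 A omega.

Notation Xs := (Xseq Am1 A omega).
Notation Ys := (Yseq Am1 A omega).
Notation Inv := (invIA0 A).

Definition Jm : 'M[R]_n := const_mx 1.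
Definition good (X : 'M[R]_n) := mxle 0 X /\ mxle (X *m e) e.
Definition Phi X := mx_series_sum (fun k => A k.+1 *m X ^+ k.+2).
Definition Tt X := mx_series_sum (fun k => A k.+2 *m X ^+ k.+3).

Lemma e_ge0 : mxle 0 (e : 'cV[R]_n).
Proof. by apply/mxle0E => i j; rewrite mxE. Qed.

Lemma good_le1 X : good X -> mxle X Jm.
Proof.
case=> /mxle0E X0 Xe i j; rewrite [Jm i j]mxE.
have := Xe i 0; rewrite !mxE => h; apply: le_trans h.
rewrite (bigD1 j) //= mxE mulr1 lerDl; apply: sumr_ge0 => l _.
by rewrite mxE mulr1.
Qed.

Lemma good_exp X m : good X -> good (X ^+ m).
Proof.
move=> [X0 Xe]; elim: m => [|m [IH0 IHe]].
  split; last by rewrite expr0 mul1mx; apply: mxle_refl.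
  exact: mxle_exp0.
split; first exact: mxle_exp0.
rewrite exprS -mulmxE -mulmxA; apply: mxle_trans Xe.
exact: mxle_mull.
Qed.

Lemma good_sub X Y : mxle 0 X -> mxle X Y -> good Y -> good X.
Proof.
move=> X0 XY [Y0 Ye]; split => //; apply: mxle_trans Ye.
by apply: mxle_mulr => //; apply: e_ge0.
Qed.

Lemma good0 : good 0.
Proof. by split; [apply: mxle_refl| rewrite mul0mx; apply: e_ge0]. Qed.

Lemma dom_series (Z : nat -> 'M[R]_n) : (forall k, good (Z k)) ->
  mx_series_cvg (fun k => Ax k *m Z k) (mx_series_sum (fun k => Ax k *m Z k)).
Proof.
move=> gZ; apply: (@mxS_dom _ _ _ _ (fun k => Ax k *m Jm) (Asum *m Jm)).
- by move=> k; apply: mxle_mul0 => //; case: (gZ k).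
- by move=> k; apply: mxle_mull => //; apply: good_le1.
- exact: mxS_mulr.
Qed.

Lemma full_cvg X : good X -> mx_series_cvg (fun k => Ax k *m X ^+ k)
   (mx_series_sum (fun k => Ax k *m X ^+ k)).
Proof. by move=> gX; apply: dom_series => k; apply: good_exp. Qed.

Lemma Phi_cvg X : good X -> mx_series_cvg (fun k => A k.+1 *m X ^+ k.+2) (Phi X).
Proof.
move=> gX; have H := mxS_shift (mxS_shift (full_cvg gX)).
have H' : mx_series_cvg (fun k => A k.+1 *m X ^+ k.+2)
   (mx_series_sum (fun k => Ax k *m X ^+ k) - Ax 0 *m X ^+ 0 - Ax 1 *m X ^+ 1) := H.
by rewrite /Phi (mxS_sum H').
Qed.

Lemma Tt_cvg X : good X -> mx_series_cvg (fun k => A k.+2 *m X ^+ k.+3) (Tt X).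
Proof.
move=> gX; have H := mxS_shift (Phi_cvg gX).
have H' : mx_series_cvg (fun k => A k.+2 *m X ^+ k.+3) (Phi X - A 1 *m X ^+ 2) := H.
by rewrite /Tt (mxS_sum H').
Qed.

Lemma Phi_split X : good X -> Phi X = A 1 *m X ^+ 2 + Tt X.
Proof.
move=> gX; have H := mxS_shift (Phi_cvg gX).
have H' : mx_series_cvg (fun k => A k.+2 *m X ^+ k.+3) (Phi X - A 1 *m X ^+ 2) := H.
by rewrite /Tt (mxS_sum H') addrC subrK.
Qed.

Lemma Sol_series X : good X ->
  mx_series_cvg (fun k => Ax k *m X ^+ k) (Am1 + (A 0 *m X + Phi X)).
Proof.
move=> gX.
have H1 := @mxS_unshift _ _ _ (fun k => Ax k.+1 *m X ^+ k.+1) _ (Phi_cvg gX).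
have H2 := @mxS_unshift _ _ _ (fun k => Ax k *m X ^+ k) _ H1.
have H3 : mx_series_cvg (fun k => Ax k *m X ^+ k)
   (Ax 0 *m X ^+ 0 + (Ax 1 *m X ^+ 1 + Phi X)) := H2.
have E0 : Ax 0 *m X ^+ 0 = Am1 by rewrite expr0 mulmx1.
have E1 : Ax 1 *m X ^+ 1 = A 0 *m X by rewrite expr1.
by rewrite E0 E1 in H3.
Qed.

Lemma Phi_ge0 X : good X -> mxle 0 (Phi X).
Proof.
move=> gX; apply: (mxS_ge0 _ (Phi_cvg gX)) => k.
by apply: mxle_mul0; [apply: (H0 k.+2) | apply: mxle_exp0; case: gX].
Qed.

Lemma Phi_mono X Y : mxle 0 X -> mxle X Y -> good Y -> mxle (Phi X) (Phi Y).
Proof.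
move=> X0 XY gY; have gX := good_sub X0 XY gY.
apply: (mxS_le _ (Phi_cvg gX) (Phi_cvg gY)) => k.
by apply: mxle_mull; [apply: (H0 k.+2) | apply: mxle_exp].
Qed.

Lemma Tt_mono X Y : mxle 0 X -> mxle X Y -> good Y -> mxle (Tt X) (Tt Y).
Proof.
move=> X0 XY gY; have gX := good_sub X0 XY gY.
apply: (mxS_le _ (Tt_cvg gX) (Tt_cvg gY)) => k.
by apply: mxle_mull; [apply: (H0 k.+3) | apply: mxle_exp].
Qed.

Lemma Inv_unit : (1%:M - A 0) \in unitmx.
Proof. exact: (IB_unit Hirr Hsto A0_ge0 A0_le A0_ne). Qed.

Lemma Inv_pos (Y : 'M[R]_n) : mxle 0 Y -> mxle 0 (Inv *m Y).
Proof. exact: (IB_inv_pos Hirr Hsto A0_ge0 A0_le A0_ne). Qed.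

Lemma Inv_l (X : 'M[R]_n) : Inv *m ((1%:M - A 0) *m X) = X.
Proof. by rewrite mulmxA mulVmx ?mul1mx // Inv_unit. Qed.

Lemma Inv_r (X : 'M[R]_n) : (1%:M - A 0) *m (Inv *m X) = X.
Proof. by rewrite mulmxA mulmxV ?mul1mx // Inv_unit. Qed.

Lemma lin_aux (Am P a1x a1x' TX TY TX' : 'M[R]_n) :
  mxle P (a1x' - a1x + (TY - TX)) -> mxle TY TX' ->
  mxle 0 (Am + (a1x' + TX') - (Am + (a1x + TX) + P)).
Proof. move=> H1 H2 i j; have := H1 i j; have := H2 i j; rewrite !mxE; lra. Qed.

Lemma step k : good (Xs k) -> mxle (Xs k) (Ys k) ->
  [/\ mxle (Ys k) (Xs k.+1), good (Xs k.+1), good (Ys k) & mxle (Xs k.+1) (Ys k.+1)].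
Proof.
move=> gX XY.
have [Hom Hk] := Hel.
have [Hineq [_ Hle]] := Hk k.
have XsS : Xs k.+1 = Ys k + omega k.+1 *: (Inv *m (A 1 *m (Ys k ^+ 2 - Xs k ^+ 2))).
  by rewrite mulmxA.
have X0 : mxle 0 (Xs k) by case: gX.
have Y0 : mxle 0 (Ys k) by apply: mxle_trans XY.
have YX' : mxle (Ys k) (Xs k.+1).
  apply/mxle_subr0; rewrite XsS addrC addKr.
  apply: mxle_scale; first by apply: Hom.
  apply: Inv_pos; apply: mxle_mul0; first exact: (H0 2).
  by apply/mxle_subr0; apply: mxle_exp.
have X'0 : mxle 0 (Xs k.+1) by apply: mxle_trans YX'.
have gX' : good (Xs k.+1) by split.
have gY : good (Ys k) by apply: good_sub YX' gX'.
split; [exact: YX' | exact: gX' | exact: gY | ].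
have E1 : (1%:M - A 0) *m Xs k.+1 =
   Am1 + Phi (Xs k) + omega k.+1 *: (A 1 *m (Ys k ^+ 2 - Xs k ^+ 2)).
  by rewrite XsS mulmxDr -scalemxAr Inv_r /Yseq /Ystep Inv_r.
have ES : mx_series_sum (fun m => A m.+2 *m (Ys k ^+ m.+3 - Xs k ^+ m.+3)) = Tt (Ys k) - Tt (Xs k).
  apply: mxS_sum; apply: mxS_ext (mxS_sub (Tt_cvg gY) (Tt_cvg gX)) => m.
  by rewrite mulmxBr.
rewrite ES [A 1 *m (Xs k.+1 ^+ 2 - _)]mulmxBr in Hineq.
apply/mxle_subr0.
have -> : Ys k.+1 - Xs k.+1 = Inv *m (Am1 + Phi (Xs k.+1) - (1%:M - A 0) *m Xs k.+1).
  by rewrite mulmxBr Inv_l.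
apply: Inv_pos; rewrite E1 (Phi_split gX) (Phi_split gX').
apply: lin_aux Hineq _.
exact: Tt_mono.
Qed.

Lemma invariant k : good (Xs k) /\ mxle (Xs k) (Ys k).
Proof.
elim: k => [|k [gX XY]].
  split; first exact: good0.
  apply: Inv_pos; rewrite -[0](addr0 0); apply: mxle_add; first exact: (H0 0).
  exact: Phi_ge0 good0.
by have [_ ? _ ?] := step gX XY.
Qed.

Lemma mono k : mxle (Xs k) (Xs k.+1).
Proof.
have [gX XY] := invariant k; have [YX _ _ _] := step gX XY.
exact: mxle_trans YX.
Qed.

Lemma YX' k : mxle (Ys k) (Xs k.+1).
Proof. have [gX XY] := invariant k; by have [] := step gX XY. Qed.


Definition Xstar : 'M[R]_n := \matrix_(i, j) limn (fun k => Xs k i j).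

Lemma Xs_le1 k i j : Xs k i j <= 1.
Proof. by have := good_le1 (invariant k).1 i j; rewrite mxE. Qed.

Lemma Xs_nd i j : nondecreasing_seq (fun k => Xs k i j).
Proof. by apply/nondecreasing_seqP => k; apply: mono. Qed.

Lemma Xs_cvgn i j : cvgn (fun k => Xs k i j).
Proof.
apply: nondecreasing_is_cvgn; first exact: Xs_nd.
by exists 1 => _ [k _ <-]; apply: Xs_le1.
Qed.

Lemma Xs_cvg : mxlim Xs Xstar.
Proof. by move=> i j; rewrite mxE; apply: Xs_cvgn. Qed.

Lemma Xs_le_star k : mxle (Xs k) Xstar.
Proof.
move=> i j; rewrite [Xstar i j]mxE.
exact: (nondecreasing_cvgn_le (@Xs_nd i j) (@Xs_cvgn i j) k).
Qed.

Lemma Ys_cvg : mxlim Ys Xstar.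
Proof.
move=> i j; apply: (@squeeze_cvgr _ _ _ _ (fun k => Xs k i j) (fun k => Xs k.+1 i j)).
- apply: nearW => k; apply/andP; split.
    exact: (invariant k).2.
  exact: YX'.
- exact: (@Xs_cvg i j).
- have := @Xs_cvg i j; by rewrite -(cvg_shiftS (fun k => Xs k i j)).
Qed.

Lemma star_good : good Xstar.
Proof.
split; first exact: (Xs_le_star 0).
move=> i j; rewrite (ord1 j).
have L := mxlimE (mxlim_mul Xs_cvg (mxlim_cst (L:=e))) i 0.
rewrite [e i 0]mxE.
apply: (ler_cvg_to L (cvg_cst (1 : R))); apply: nearW => k.
by have := (invariant k).1.2 i 0; rewrite [e i 0]mxE.
Qed.

Definition Lphi := (1%:M - A 0) *m Xstar - Am1.

Lemma Phi_lim : mxlim (fun k => Phi (Xs k)) Lphi.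
Proof.
have H := mxlim_add (mxlim_mul (mxlim_cst (L:=1%:M - A 0)) Ys_cvg) (mxlim_opp (mxlim_cst (L:=Am1))).
have -> : (fun k => Phi (Xs k)) = (fun k => (1%:M - A 0) *m Ys k + - Am1).
  apply/funext => k; rewrite /Yseq /Ystep Inv_r.
  by rewrite addrC addKr.
exact: H.
Qed.

Lemma Phi_star : Phi Xstar = Lphi.
Proof.
apply/matrixP => i j; apply/eqP; rewrite eq_le; apply/andP; split; last first.
  apply: (ler_cvg_to (@Phi_lim i j) (cvg_cst (Phi Xstar i j))); apply: nearW => k.
  exact: (Phi_mono (invariant k).1.1 (Xs_le_star k) star_good).
have HS := mxS_cvgS i j (Phi_cvg star_good).
apply: (ler_cvg_to HS (cvg_cst (Lphi i j))); apply: nearW => N.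
have Hp : (fun k => series (fun m => (A m.+1 *m Xs k ^+ m.+2) i j) N) @ \oo -->
          series (fun m => (A m.+1 *m Xstar ^+ m.+2) i j) N.
  rewrite /series /=.
  apply: (@cvg_bigsumS _ _ _ _ (fun m k => (A m.+1 *m Xs k ^+ m.+2) i j)) => m.
  exact: (mxlimE (mxlim_mul (mxlim_cst (L:=A m.+1)) (mxlim_exp (m:=m.+2) Xs_cvg)) i j).
apply: (ler_cvg_to Hp (@Phi_lim i j)); apply: nearW => k.
have gk := (invariant k).1.
apply: (cvgS_partial _ (mxS_cvgS i j (Phi_cvg gk))) => m.
have : mxle 0 (A m.+1 *m Xs k ^+ m.+2).
  by apply: mxle_mul0; [apply: (H0 m.+2) | apply: mxle_exp0; case: gk].
by move/mxle0E.
Qed.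

Lemma rowsum_e (X : 'M[R]_n) i : (X *m e) i 0 = \sum_l X i l.
Proof. rewrite mxE; apply: eq_bigr => l _; by rewrite ones_entry mulr1. Qed.

Lemma alg3 (a b x : 'M[R]_n) : a + (b + (x - b - a)) = x.
Proof. by apply/matrixP => i j; rewrite !mxE; ring. Qed.

Lemma star_sol : mx_series_cvg (fun k => Ax k *m Xstar ^+ k) Xstar.
Proof.
have H := Sol_series star_good.
by rewrite Phi_star /Lphi mulmxBl mul1mx alg3 in H.
Qed.

Section Final.
Variable c : 'cV[R]_n.
Hypothesis Hc0 : mxle 0 c.
Hypothesis Hpc : Asum *m c + w = c + eta *: e.
Hypothesis HG0 : mxle 0 G.
Hypothesis HG : mx_series_cvg (fun k => Ax k *m G ^+ k) G.
Hypothesis Hmin : forall X : 'M[R]_n, mxle 0 X ->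
     mx_series_cvg (fun k => Ax k *m X ^+ k) X -> mxle G X.

Lemma star_eq_G : Xstar = G.
Proof.
have GX := Hmin star_good.1 star_sol.
have Gge : forall i, 1 <= (G *m e) i 0.
  by move=> i; apply: Ge_ge => //.
have Xe := star_good.2.
apply/matrixP => i j; apply/eqP; rewrite -subr_eq0; apply/eqP.
have d0 : forall l, 0 <= Xstar i l - G i l by move=> l; rewrite subr_ge0; apply: GX.
have : \sum_l (Xstar i l - G i l) = 0.
  apply/eqP; rewrite eq_le sumr_ge0 // andbT.
  have h1 := Xe i 0; have h2 := Gge i.
  rewrite rowsum_e ones_entry in h1; rewrite rowsum_e in h2; rewrite sumrB.
  lra.
move=> hs; exact: (@psumr_eq0P _ _ _ _ (fun l _ => d0 l) hs j isT).
Qed.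

End Final.

End Iter.
End Main.

Theorem proposition3 (R : realType) (n : nat)
  (Am1 : 'M[R]_n) (A : nat -> 'M[R]_n)          (* Am1 = A_{-1}, A i = A_i for i >= 0 *)
  (Asum : 'M[R]_n) (M1 : 'M[R]_n) (v : 'rV[R]_n) (G : 'M[R]_n)
  (omega : nat -> R) :
  (forall k, mxle 0 (Aext Am1 A k)) ->
  mx_series_cvg (Aext Am1 A) Asum ->
  irreducible_mx Asum -> row_stochastic Asum ->
  mx_series_cvg (fun k => ((k%:Z - 1)%:~R : R) *: Aext Am1 A k) M1 ->
  (forall j, 0 < v 0 j) -> v *m Asum = v -> (v *m ones n) 0 0 = 1 ->
  (v *m (M1 *m ones n)) 0 0 < 0 ->
  mxle 0 G ->
  mx_series_cvg (fun k => Aext Am1 A k *m G ^+ k) G ->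
  (forall X : 'M[R]_n, mxle 0 X ->
     mx_series_cvg (fun k => Aext Am1 A k *m X ^+ k) X -> mxle G X) ->
  eligible Am1 A omega ->
  (forall k, mxle (Xseq Am1 A omega k) (Xseq Am1 A omega k.+1)) /\
  (forall i j, (fun k => Xseq Am1 A omega k i j) @ \oo --> G i j).
Proof.
move=> H0 HA Hirr Hsto HM Hv HvA Hve Heta HG0 HG Hmin Hel.
have [c [Hc0 Hpc]] := poisson M1 Hirr Hsto HvA Hve.
have E := star_eq_G H0 HA Hirr Hsto HM Heta Hel Hc0 Hpc HG0 HG Hmin.
split; first exact: (mono H0 HA Hirr Hsto HM Heta Hel).
move=> i j; rewrite -E; exact: (mxlimE (Xs_cvg H0 HA Hirr Hsto HM Heta Hel) i j).
Qed.
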